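(* Let $\mathcal{S} \subseteq M_n$ be a quantum graph. Then $\mathcal{S}$ is disconnected if and only if there exists a projection $P \in M_n$ with $P \neq 0$ and $P \neq I_n$ such that $P \mathcal{S} (I_n-P) = \{0\}$.
   Context: $M_n$ denotes the $n\times n$ complex matrices, $I_n$ the identity matrix. A projection is $P\in M_n$ with $P=P^2=P^\dagger$. A quantum graph on $M_n$ is an operator system: a linear subspace $\mathcal{S}\subseteq M_n$ closed under taking adjoints and containing $I_n$. For subspaces $\mathcal{U},\mathcal{V}\subseteq M_n$, $\mathcal{U}\mathcal{V}=\operatorname{span}\{UV : U\in\mathcal{U}, V\in\mathcal{V}\}$, $\mathcal{U}^0=\mathbb{C}I_n$ and $\mathcal{U}^{k+1}=\mathcal{U}^k\mathcal{U}$. For subsets, $P\mathcal{S}Q=\{PAQ : A\in\mathcal{S}\}$. A quantum graph $\mathcal{S}\subseteq M_n$ is connected if there exists $m\in\mathbb{N}$ with $\mathcal{S}^m=M_n$, and disconnected otherwise. *)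

(* Defs.v *)
From HB Require Import structures.
From mathcomp Require Import all_boot all_order all_algebra.
From mathcomp Require Import reals.
From mathcomp Require Import complex.
Set Implicit Arguments. Unset Strict Implicit. Unset Printing Implicit Defensive.
Import Order.TTheory GRing.Theory Num.Theory.
Local Open Scope ring_scope.

Definition adjmx (C : numClosedFieldType) (n : nat) (A : 'M[C]_n) : 'M[C]_n :=
  (map_mx Num.conj A)^T.

Definition is_projection (C : numClosedFieldType) (n : nat) (P : 'M[C]_n) : Prop :=
  P = P *m P /\ P = adjmx P.

Definition quantum_graph (C : numClosedFieldType) (n : nat)
    (S : {vspace 'M[C]_n}) : Prop :=
  (1%:M \in S) /\ (forall A, A \in S -> adjmx A \in S).

(* UV = span {U V : U in U, V in V}; by bilinearity it is spanned by
   the products of basis elements. *)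
Definition mxvs_mul (C : fieldType) (n : nat) (U V : {vspace 'M[C]_n})
    : {vspace 'M[C]_n} :=
  (<< [seq u *m v | u <- vbasis U, v <- vbasis V] >>)%VS.

Fixpoint mxvs_pow (C : fieldType) (n : nat) (U : {vspace 'M[C]_n}) (k : nat)
    : {vspace 'M[C]_n} :=
  match k with
  | 0 => (<[ (1%:M : 'M[C]_n) ]>)%VS
  | k'.+1 => mxvs_mul (mxvs_pow U k') U
  end.

Definition qg_connected (C : fieldType) (n : nat) (S : {vspace 'M[C]_n}) : Prop :=
  exists m : nat, mxvs_pow S m = fullv.

Definition qg_disconnected (C : fieldType) (n : nat) (S : {vspace 'M[C]_n}) : Prop :=
  ~ qg_connected S.

(* Main.v *)
Require Import Defs.
From HB Require Import structures.
From mathcomp Require Import all_boot all_order all_algebra.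
From mathcomp Require Import reals complex spectral.
From Stdlib Require Import Classical.
Import Order.TTheory GRing.Theory Num.Theory.
Local Open Scope ring_scope.
Set Implicit Arguments. Unset Strict Implicit. Unset Printing Implicit Defensive.

Section VS.
Variables (C : fieldType) (n : nat).
Implicit Types U V W : {vspace 'M[C]_n}.

Lemma mxvs_mul_mem U V u v : u \in U -> v \in V -> u *m v \in mxvs_mul U V.
Proof.
move=> Hu Hv; rewrite (coord_vbasis Hu) (coord_vbasis Hv) mulmx_suml.
apply: rpred_sum => i _; rewrite mulmx_sumr; apply: rpred_sum => j _.
rewrite -scalemxAl -scalemxAr; apply: rpredZ; apply: rpredZ.
apply: memv_span; apply: allpairs_f; apply: mem_nth; by rewrite size_tuple.
Qed.

Lemma mxvs_mul_sub U V W :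
  (forall u v, u \in U -> v \in V -> u *m v \in W) -> (mxvs_mul U V <= W)%VS.
Proof.
move=> H; apply/span_subvP => x /allpairsP [[u v] [Hu Hv ->]].
by apply: H; apply: vbasis_mem.
Qed.

Lemma mxvs_mul_ind U V W (f : 'M[C]_n -> 'M[C]_n) (s : C -> C) :
  (forall x y, f (x + y) = f x + f y) -> (forall a x, f (a *: x) = s a *: f x) ->
  (forall u v, u \in U -> v \in V -> f (u *m v) \in W) ->
  forall x, x \in mxvs_mul U V -> f x \in W.
Proof.
move=> fD fZ H x Hx.
have f0 : f 0 = 0.
  by have h := fD 0 0; rewrite addr0 in h; apply: (addrI (f 0)); rewrite -h addr0.
have := coord_span (X := in_tuple [seq u *m v | u <- vbasis U, v <- vbasis V]) Hx.
move=> ->; rewrite (big_morph f fD f0); apply: rpred_sum => i _.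
rewrite fZ; apply: rpredZ.
have : [seq u *m v | u <- vbasis U, v <- vbasis V]`_i \in
     [seq u *m v | u <- vbasis U, v <- vbasis V].
  by apply: mem_nth; rewrite -[X in (_ < X)%N](size_tuple (in_tuple _)).
by case/allpairsP => [[u v] [Hu Hv ->]]; apply: H; apply: vbasis_mem.
Qed.

End VS.
Section Pow.
Variables (C : fieldType) (n : nat) (S : {vspace 'M[C]_n}).
Hypothesis S1 : 1%:M \in S.

Lemma pow_one k : 1%:M \in mxvs_pow S k.
Proof.
elim: k => [|k IH] /=; first exact: memv_line.
by rewrite -[1%:M]mulmx1; apply: mxvs_mul_mem.
Qed.

Lemma pow_S1 x : x \in S -> x \in mxvs_pow S 1.
Proof. by move=> Hx; rewrite /= -[x]mul1mx; apply: mxvs_mul_mem => //; apply: memv_line. Qed.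

Lemma pow_mono k : (mxvs_pow S k <= mxvs_pow S k.+1)%VS.
Proof. by apply/subvP => x Hx /=; rewrite -[x]mulmx1; apply: mxvs_mul_mem. Qed.

Lemma pow_monoD a b : (mxvs_pow S a <= mxvs_pow S (a + b))%VS.
Proof.
elim: b => [|b IH]; first by rewrite addn0 subvv.
by apply: subv_trans IH _; rewrite addnS; apply: pow_mono.
Qed.

Lemma pow_mul a b x y : x \in mxvs_pow S a -> y \in mxvs_pow S b ->
  x *m y \in mxvs_pow S (a + b).
Proof.
elim: b y => [|b IH] y Hx Hy.
  case/vlineP: Hy => k ->; rewrite addn0 -scalemxAr mulmx1; exact: rpredZ.
rewrite addnS /=; move: Hy => /=.
apply: (mxvs_mul_ind (f := mulmx x) (s := id)).
- by move=> ? ?; rewrite mulmxDr.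
- by move=> ? ?; rewrite scalemxAr.
by move=> u v Hu Hv; rewrite mulmxA; apply: mxvs_mul_mem => //; apply: IH.
Qed.

End Pow.
Section Adj.
Variables (C : numClosedFieldType) (n : nat).
Implicit Types A B : 'M[C]_n.

Lemma adjmxD A B : adjmx (A + B) = adjmx A + adjmx B.
Proof. by apply/matrixP => i j; rewrite !mxE rmorphD. Qed.
Lemma adjmxZ a A : adjmx (a *: A) = (Num.conj a) *: adjmx A.
Proof. by apply/matrixP => i j; rewrite !mxE rmorphM. Qed.
Lemma adjmxM A B : adjmx (A *m B) = adjmx B *m adjmx A.
Proof. by rewrite /adjmx map_mxM trmx_mul. Qed.
Lemma adjmxK A : adjmx (adjmx A) = A.
Proof. by apply/matrixP => i j; rewrite !mxE conjCK. Qed.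
Lemma adjmx1 : adjmx (1%:M : 'M[C]_n) = 1%:M.
Proof. by apply/matrixP => i j; rewrite !mxE eq_sym; case: (_ == _); rewrite ?rmorph1 ?rmorph0. Qed.
Lemma adjmxN A : adjmx (- A) = - adjmx A.
Proof. by apply/matrixP => i j; rewrite !mxE rmorphN. Qed.
Lemma adjmxB A B : adjmx (A - B) = adjmx A - adjmx B.
Proof. by rewrite adjmxD adjmxN. Qed.

Lemma pow_adj (S : {vspace 'M[C]_n}) : quantum_graph S ->
  forall k x, x \in mxvs_pow S k -> adjmx x \in mxvs_pow S k.
Proof.
case=> S1 Sadj; elim=> [|k IH] x /=.
  by case/vlineP => c ->; rewrite adjmxZ adjmx1; apply: rpredZ; apply: memv_line.
apply: (mxvs_mul_ind (f := @adjmx C n) (s := Num.conj)).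
- exact: adjmxD.
- exact: adjmxZ.
move=> u v Hu Hv; rewrite adjmxM; change (adjmx v *m adjmx u \in mxvs_pow S (1 + k)); apply: pow_mul => //.
  by apply: pow_S1; apply: Sadj.
exact: IH.
Qed.
End Adj.
Section Burnside.
Variables (C : numClosedFieldType) (n : nat) (A : {vspace 'M[C]_n}).
Hypothesis A1 : 1%:M \in A.
Hypothesis AM : forall x y, x \in A -> y \in A -> x *m y \in A.
Hypothesis Aadj : forall x, x \in A -> adjmx x \in A.
Hypothesis Hirr : forall m (U : 'M[C]_(m, n)),
  (forall M, M \in A -> (U *m M <= U)%MS) -> U = 0 \/ row_full U.

Lemma transit (v y : 'rV[C]_n) : v != 0 -> exists B, B \in A /\ v *m B = y.
Proof.
move=> v0.
pose b (k : 'I_(\dim A)) := (vbasis A)`_k.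
have bA k : b k \in A by apply: vbasis_mem; apply: mem_nth; rewrite size_tuple.
pose U := \matrix_(k < \dim A) (v *m b k).
have G B : B \in A -> (v *m B <= U)%MS.
  move=> HB; rewrite (coord_vbasis HB) mulmx_sumr; apply: summx_sub => k _.
  by rewrite -scalemxAr; apply: scalemx_sub; rewrite -(rowK (fun k => v *m b k)); apply: row_sub.
have : U = 0 \/ row_full U.
  apply: Hirr => M HM; apply/row_subP => k.
  by rewrite row_mul rowK -mulmxA; apply: G; apply: AM.
case=> [U0|Uf].
  by have := G _ A1; rewrite mulmx1 U0 => /submx0null v00; rewrite v00 eqxx in v0.
have /submxP [w ->] := submx_full y Uf.
exists (\sum_k w 0 k *: b k); split.
  by apply: rpred_sum => k _; apply: rpredZ.
rewrite mulmx_sumr [w *m U]mulmx_sum_row; apply: eq_bigr => k _.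
by rewrite rowK scalemxAr.
Qed.

Lemma nz_row m (T : 'M[C]_(m, n)) : T != 0 -> exists i, row i T != 0.
Proof.
move=> T0; case: (pickP (fun i => row i T != 0)) => [i Hi|H]; first by exists i.
case/eqP: T0; apply/row_matrixP => i; have := H i; move/negbFE/eqP => ->.
by rewrite row0.
Qed.

Lemma descend T : T \in A -> T != 0 -> (1 < \rank T)%N ->
  exists T2, [/\ T2 \in A, T2 != 0 & (\rank T2 < \rank T)%N].
Proof.
move=> TA T0 rT.
have [i ui] := nz_row T0; set u := row i T in ui.
have [j wj] : exists j, ~~ (row j T <= u)%MS.
  case: (pickP (fun j => ~~ (row j T <= u)%MS)) => [j Hj|H]; first by exists j.
  have : (T <= u)%MS by apply/row_subP => j; have := H j; move/negbFE.
  move/mxrankS; rewrite rank_rV ui => h; by move: (leq_ltn_trans h rT); rewrite ltnn.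
set w := row j T in wj.
have [B [BA uB]] := transit (delta_mx 0 j) ui.
pose K := B *m T.
have uK : u *m K = w by rewrite /K mulmxA uB -rowE.
have stK : stablemx T K by rewrite /K mulmxA submxMl.
have rT0 : (0 < \rank T)%N by apply: leq_trans rT.
have [a /eigenvalueP [z0 Hz0 z00]] := eigenvalue_closed (restrictmx T K) rT0.
have stz0 : stablemx z0 (restrictmx T K).
  by rewrite Hz0 scalemx_sub.
rewrite (stablemx_restrict _ stK) in stz0.
set z := z0 *m row_base T in stz0.
have z0' : z != 0 by rewrite /z mulmx_free_eq0 ?row_base_free.
have [a' za'] : exists a', (z <= eigenspace K a')%MS by apply/eigenvectorP.
have zT : (z <= T)%MS by rewrite /z (submx_trans (submxMl _ _)) // eq_row_base.
pose T2 := T *m (K - a'%:M).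
exists T2; split.
- rewrite /T2 mulmxBr mul_mx_scalar; apply: rpredB; last exact: rpredZ.
  by rewrite /K; apply: AM => //; apply: AM.
- apply/eqP => T20.
  have : u *m (K - a'%:M) = 0 by rewrite /u rowE -mulmxA -/T2 T20 mulmx0.
  rewrite mulmxBr uK mul_mx_scalar => /eqP; rewrite subr_eq0 => /eqP wu.
  by move: wj; rewrite wu scalemx_sub.
- have := mxrank_mul_ker T (K - a'%:M); rewrite -/T2 => <-.
  have : (z <= T :&: kermx (K - a'%:M))%MS by rewrite sub_capmx zT.
  move/mxrankS; rewrite rank_rV z0' => h.
  by rewrite -[X in (X < _)%N]addn0 ltn_add2l.
Qed.

Lemma rank1_ex : (0 < n)%N -> exists T, T \in A /\ \rank T = 1%N.
Proof.
move=> n0.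
suff H : forall r T, T \in A -> T != 0 -> (\rank T <= r)%N ->
    exists T1, T1 \in A /\ \rank T1 = 1%N.
  apply: (H n 1%:M) => //; last by rewrite mxrank1.
  by rewrite -mxrank_eq0 mxrank1 -lt0n.
elim=> [|r IH] T TA T0 rT.
  by move: rT; rewrite leqn0 mxrank_eq0 (negbTE T0).
have r0 : (0 < \rank T)%N by rewrite lt0n mxrank_eq0.
have [r1|r1|r1] := ltngtP (\rank T) 1%N.
- by move: r0; rewrite lt0n; move: r1; rewrite ltnS leqn0 => ->.
- have [T2 [T2A T20 rT2]] := descend TA T0 r1.
  by apply: (IH T2) => //; rewrite -ltnS (leq_trans rT2 rT).
- by exists T.
Qed.

Lemma delta_in i j : delta_mx i j \in A.
Proof.
have n0 : (0 < n)%N by apply: leq_ltn_trans (ltn_ord i).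
have [T [TA rT]] := rank1_ex n0.
have T0 : T != 0 by rewrite -mxrank_eq0 rT.
have [k rk] := nz_row T0; set r := row k T in rk.
have Tr : (T <= r)%MS.
  by rewrite -(mxrank_leqif_sup (row_sub k T)).2 rank_rV rk rT.
have [D TD] := submxP Tr.
have D0 : D != 0 by apply: contraNneq T0 => D0; rewrite TD D0 mul0mx.
pose c := (map_mx Num.conj D)^T.
have c0 : c != 0.
  apply: contraNneq D0 => c0; apply/eqP/matrixP => a b.
  have := congr1 (fun M : 'rV[C]_n => M b a) c0; rewrite !mxE => /eqP.
  by rewrite conjC_eq0 => /eqP.
have [B' [B'A cB']] := transit (delta_mx 0 i) c0.
have [C0 [C0A rC0]] := transit (delta_mx 0 j) rk.
have BD : adjmx B' *m D = delta_mx i 0.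
  have := congr1 (fun M => (map_mx Num.conj M)^T) cB'.
  rewrite map_mxM trmx_mul /c.
  have -> : ((map_mx Num.conj (map_mx Num.conj D)^T)^T) = D.
    by apply/matrixP => a b; rewrite !mxE conjCK.
  move=> ->; apply/matrixP => a b; rewrite !mxE.
  by case: (_ == _); case: (_ == _); rewrite /= ?rmorph1 ?rmorph0.
have -> : delta_mx i j = adjmx B' *m T *m C0.
  by rewrite TD mulmxA BD -mulmxA rC0 mul_delta_mx.
by apply: AM => //; apply: AM => //; apply: Aadj.
Qed.

Lemma burnside_full : A = fullv.
Proof.
apply/eqP; rewrite eqEsubv subvf /=; apply/subvP => M _.
rewrite (matrix_sum_delta M); apply: rpred_sum => i _; apply: rpred_sum => j _.
by apply: rpredZ; apply: delta_in.
Qed.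

End Burnside.
Section Backward.
Variables (C : numClosedFieldType) (n : nat).

Lemma mul_delta_entry (P : 'M[C]_n) (i j a b : 'I_n) :
  (P *m delta_mx i j) a b = P a i * (b == j)%:R.
Proof.
rewrite !mxE (bigD1 i) //= big1 ?addr0; last first.
  by move=> k /negbTE ki; rewrite mxE ki mulr0.
by rewrite mxE eqxx.
Qed.

Lemma delta_mul_entry (P : 'M[C]_n) (i j a b : 'I_n) :
  (delta_mx i j *m P) a b = (a == i)%:R * P j b.
Proof.
rewrite !mxE (bigD1 j) //= big1 ?addr0; last first.
  by move=> k /negbTE kj; rewrite mxE kj andbF mul0r.
by rewrite mxE eqxx andbT.
Qed.

Lemma comm_all_trivial (P : 'M[C]_n) :
  P = P *m P -> (forall M, P *m M = M *m P) -> P = 0 \/ P = 1%:M.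
Proof.
move=> PP H.
case: (pickP (fun _ : 'I_n => true)) => [i0 _|H0]; last first.
  by left; apply/matrixP => a; have := H0 a.
pose c := P i0 i0.
have Pc : P = c%:M.
  apply/matrixP => a b; rewrite mxE.
  have := congr1 (fun M : 'M[C]_n => M a b) (H (delta_mx b b)).
  rewrite mul_delta_entry delta_mul_entry eqxx mulr1.
  case: (eqVneq a b) => [->|ab]; last by rewrite mul0r.
  move=> _; rewrite mulr1n.
  have := congr1 (fun M : 'M[C]_n => M b i0) (H (delta_mx b i0)).
  by rewrite mul_delta_entry delta_mul_entry !eqxx mulr1 mul1r.
have : c * c = c.
  by have := congr1 (fun M : 'M[C]_n => M i0 i0) PP; rewrite Pc -scalar_mxM !mxE eqxx !mulr1n.
move/eqP; rewrite -subr_eq0 -{3}[c]mulr1 -mulrBr mulf_eq0 subr_eq0 => /orP[]/eqP c0.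
  by left; rewrite Pc c0; apply/matrixP => a b; rewrite !mxE mul0rn.
by right; rewrite Pc -c0.
Qed.

End Backward.
Lemma stab_exists (C : fieldType) n (S : {vspace 'M[C]_n}) : 1%:M \in S ->
  exists k, mxvs_pow S k.+1 = mxvs_pow S k.
Proof.
move=> S1.
have H : forall k, (k <= \dim (mxvs_pow S k))%N \/ exists j, mxvs_pow S j.+1 = mxvs_pow S j.
  elim=> [|k [IH|IH]]; [by left | | by right].
  case: (eqVneq (mxvs_pow S k.+1) (mxvs_pow S k)) => [e|ne]; first by right; exists k.
  left; apply: leq_ltn_trans IH _.
  rewrite ltn_neqAle (dimv_leqif_eq (pow_mono S1 k)).
  by rewrite eq_sym ne dimvS // pow_mono.
case: (H (\dim (fullv : {vspace 'M[C]_n})).+1) => // h.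
by move: (leq_trans h (dimvS (subvf (mxvs_pow S _)))); rewrite ltnn.
Qed.
Unset Implicit Arguments.
Theorem theorem3p3 (R : realType) (n : nat) (S : {vspace 'M[R[i]]_n}) :
  quantum_graph S ->
  (qg_disconnected S <->
   exists P : 'M[R[i]]_n,
     [/\ is_projection P, P <> 0, P <> 1%:M &
         forall A, A \in S -> P *m A *m (1%:M - P) = 0]).
Proof.
move=> Hq; have [S1 Sadj] := Hq; split; last first.
  move=> [P [[PP Padj] P0 P1 HP]] [m Hm].
  have commS v : v \in S -> P *m v = v *m P.
    move=> vS.
    have h1 := HP _ vS; have h2 := HP _ (Sadj _ vS).
    have h2' := congr1 (@adjmx _ _) h2.
    rewrite !adjmxM adjmxK adjmxB adjmx1 -Padj in h2'.
    have a0 : adjmx 0 = (0 : 'M[R[i]]_n) by apply/matrixP => a b; rewrite !mxE rmorph0.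
    rewrite a0 in h2'.
    rewrite mulmxBr mulmx1 in h1; rewrite !mulmxBl mul1mx in h2'.
    move/eqP: h1; rewrite subr_eq0 => /eqP ->.
    by move/eqP: h2'; rewrite subr_eq0 => /eqP ->; rewrite mulmxA.
  have commP : forall k x, x \in mxvs_pow S k -> P *m x = x *m P.
    elim=> [|k IH] x /=.
      by case/vlineP => c ->; rewrite -!scalemxAr -scalemxAl mulmx1 mul1mx.
    move=> Hx; apply/eqP; rewrite -subr_eq0 -memv0.
    move: x Hx; apply: (mxvs_mul_ind (f := fun x => P *m x - x *m P) (s := id)).
    - by move=> x y; rewrite mulmxDr mulmxDl opprD addrACA.
    - by move=> a x; rewrite scalerBr scalemxAr scalemxAl.
    by move=> u v Hu Hv; rewrite memv0 mulmxA IH // -!mulmxA commS // subrr.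
  have hc : forall M, P *m M = M *m P by move=> M; apply: (commP m); rewrite Hm memvf.
  by case: (comm_all_trivial PP hc).
move=> Hdisc.
have [k Hk] := stab_exists S1.
have stab j : mxvs_pow S (k + j) = mxvs_pow S k.
  by elim: j => [|j IH]; rewrite ?addn0 // addnS /= IH.
pose A := mxvs_pow S k.
have A1 : 1%:M \in A by apply: pow_one.
have AM x y : x \in A -> y \in A -> x *m y \in A.
  by move=> Hx Hy; rewrite /A -(stab k); apply: pow_mul.
have Aadj x : x \in A -> adjmx x \in A by apply: pow_adj.
have SA x : x \in S -> x \in A.
  move=> xS; rewrite /A -Hk; have := pow_monoD S1 1 k.
  by rewrite addnC addn1 => /subvP; apply; apply: pow_S1.
have [m [U [HU HU']]] : exists m (U : 'M[R[i]]_(m, n)),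
    (forall M, M \in A -> (U *m M <= U)%MS) /\ ~ (U = 0 \/ row_full U).
  apply: NNPP => Hn; apply: Hdisc; exists k; apply: burnside_full => // m U HU.
  by apply: NNPP => Hn2; apply: Hn; exists m, U.
have U0 : U != 0 by apply/eqP => U0; apply: HU'; left.
have Unf : ~~ row_full U by apply/negP => Uf; apply: HU'; right.
pose Q := schmidt (row_base U).
have Qu : Q \is unitarymx by apply: schmidt_unitarymx; apply: rank_leq_col.
have eqQU : (Q :=: U)%MS.
  exact: eqmx_trans (eqmx_schmidt_free (row_base_free U)) (eq_row_base U).
pose Qs := (map_mx Num.conj Q)^T.
have QQ : Q *m Qs = 1%:M by rewrite /Qs map_trmx; apply/unitarymxP.
have QK : (map_mx Num.conj Qs)^T = Q by apply/matrixP => a b; rewrite !mxE conjCK.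
have QQQ : Q *m (Qs *m Q) = Q by rewrite mulmxA QQ mul1mx.
exists (Qs *m Q); split.
- split; first by rewrite mulmxA -[Qs *m Q *m Qs]mulmxA QQ mulmx1.
  by rewrite /adjmx map_mxM trmx_mul QK.
- move=> P0; move: U0; rewrite -mxrank_eq0 -eqQU mxrank_eq0 -QQQ P0 mulmx0.
  by rewrite eqxx.
- move=> P1; move: Unf; rewrite /row_full -eqQU.
  have : (\rank (Qs *m Q) <= \rank Q)%N by apply: mxrankS; apply: submxMl.
  rewrite P1 mxrank1 => h; rewrite eqn_leq h /=.
  by rewrite rank_leq_col.
move=> M MS.
have : (Q *m M <= Q)%MS by rewrite (eqmxMr M eqQU) eqQU; apply: HU; apply: SA.
case/submxP => E QE.
by rewrite -[Qs *m Q *m M]mulmxA QE mulmxA -mulmxA mulmxBr mulmx1 -!mulmxA QQQ subrr.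
Qed.
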